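(* Let $\lambda>0$ and $\mu=\nu>0$, and equip $\Sigma^3$ with the generalised Riemannian Berger metric $g$ described in the context. For $\theta>0$ let $U^2_\theta\subset\Sigma^3$ be the torus $\{(\cosh\theta\, e^{i\alpha},\sinh\theta\, e^{i\beta}):\alpha,\beta\in\mathbb R\}$, and let $H_g$ be its mean curvature vector in $(\Sigma^3,g)$. Then for every real number $C>\frac1\mu$ there exists $\theta>0$ such that the mean curvature of $U^2_\theta$ is constant and satisfies $\|H_g\|\equiv C$.
   Context: $\Sigma^3=\{(z,w)\in\mathbb C^2: |z|^2-|w|^2=1\}$ is a Lie group with multiplication $(z_1,w_1)\cdot(z_2,w_2)=(z_1z_2+\bar w_1w_2,\ w_1z_2+\bar z_1w_2)$ and inverse $(z,w)^{-1}=(\bar z,-w)$; the same formula defines $p\cdot v$ for $v\in\mathbb C^2$. Let $\langle (z_1,w_1),(z_2,w_2)\rangle=\mathrm{Re}(\bar z_1z_2+\bar w_1w_2)$. For $\lambda,\mu,\nu>0$ the left-invariant Riemannian metric is $g_p(A,B)=\lambda^2\langle p^{-1}A,(i,0)\rangle\langle p^{-1}B,(i,0)\rangle+\mu^2\langle p^{-1}A,(0,-1)\rangle\langle p^{-1}B,(0,-1)\rangle+\nu^2\langle p^{-1}A,(0,i)\rangle\langle p^{-1}B,(0,i)\rangle+\langle p^{-1}A,(1,0)\rangle\langle p^{-1}B,(1,0)\rangle$ for $A,B\in T_p\Sigma^3$. For a surface in $(\Sigma^3,g)$ with $g$-orthonormal tangent basis $V_1,V_2$, the mean curvature vector is $H_g=\tfrac12(B(V_1,V_1)+B(V_2,V_2))$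 with $B$ the second fundamental form, and $\|H_g\|=\sqrt{g(H_g,H_g)}$. *)

(* Defs.v *)
From Stdlib Require Import Reals.
From Coquelicot Require Import Coquelicot.
Open Scope R_scope.

(* A complex number is a pair (Re, Im). *)
Definition cpx := (R * R)%type.
Definition cadd (a b : cpx) : cpx := (fst a + fst b, snd a + snd b).
Definition cmul (a b : cpx) : cpx :=
  (fst a * fst b - snd a * snd b, fst a * snd b + snd a * fst b).
Definition cconj (a : cpx) : cpx := (fst a, - snd a).
Definition copp (a : cpx) : cpx := (- fst a, - snd a).

Definition C2 := (cpx * cpx)%type.

(* (z1,w1).(z2,w2) = (z1 z2 + conj(w1) w2, w1 z2 + conj(z1) w2);
   the same formula defines p . v for v in C^2. *)
Definition gmul (p v : C2) : C2 :=
  (cadd (cmul (fst p) (fst v)) (cmul (cconj (snd p)) (snd v)),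
   cadd (cmul (snd p) (fst v)) (cmul (cconj (fst p)) (snd v))).
Definition ginv (p : C2) : C2 := (cconj (fst p), copp (snd p)).

Definition pair (a b : C2) : R :=
  fst (cadd (cmul (cconj (fst a)) (fst b)) (cmul (cconj (snd a)) (snd b))).

Definition e_i : C2 := ((0, 1), (0, 0)).
Definition e_m1 : C2 := ((0, 0), (-1, 0)).
Definition e_wi : C2 := ((0, 0), (0, 1)).
Definition e_1 : C2 := ((1, 0), (0, 0)).

Definition gmetric (lam mu nu : R) (p A B : C2) : R :=
  let a := gmul (ginv p) A in
  let b := gmul (ginv p) B in
  lam ^ 2 * pair a e_i * pair b e_i
  + mu ^ 2 * pair a e_m1 * pair b e_m1
  + nu ^ 2 * pair a e_wi * pair b e_wi
  + pair a e_1 * pair b e_1.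

Definition vec := nat -> R.
Definition upd (u : vec) (i : nat) (s : R) : vec :=
  fun k => if Nat.eqb k i then s else u k.
Definition pd (h : vec -> R) (i : nat) (u : vec) : R :=
  Derive (fun s => h (upd u i s)) (u i).

Definition sum2 (f : nat -> R) : R := f 0%nat + f 1%nat.
Definition sum3 (f : nat -> R) : R := f 0%nat + f 1%nat + f 2%nat.

(* ---------- the global chart (covering map) R^3 -> Sigma^3 ----------
   F(t,x,y) = (sqrt(1+x^2+y^2) e^{it}, x + i y); indeed |z|^2-|w|^2 = 1,
   and F is a local diffeomorphism (universal covering) onto Sigma^3. *)
Definition Fchart (u : vec) : C2 :=
  let r := sqrt (1 + u 1%nat ^ 2 + u 2%nat ^ 2) in
  ((r * cos (u 0%nat), r * sin (u 0%nat)), (u 1%nat, u 2%nat)).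

Definition Fcomp (k : nat) (u : vec) : R :=
  match k with
  | 0%nat => fst (fst (Fchart u))
  | 1%nat => snd (fst (Fchart u))
  | 2%nat => fst (snd (Fchart u))
  | _ => snd (snd (Fchart u))
  end.

Definition dF (i : nat) (u : vec) : C2 :=
  ((pd (Fcomp 0) i u, pd (Fcomp 1) i u), (pd (Fcomp 2) i u, pd (Fcomp 3) i u)).

Definition Gm (lam mu nu : R) (i j : nat) (u : vec) : R :=
  gmetric lam mu nu (Fchart u) (dF i u) (dF j u).

Definition m3 (i : nat) : nat := Nat.modulo i 3.
Definition det3 (M : nat -> nat -> R) : R :=
  sum3 (fun j => M 0%nat j *
     (M 1%nat (m3 (j+1)) * M 2%nat (m3 (j+2)) - M 1%nat (m3 (j+2)) * M 2%nat (m3 (j+1)))).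
Definition inv3 (M : nat -> nat -> R) (i j : nat) : R :=
  (M (m3 (j+1)) (m3 (i+1)) * M (m3 (j+2)) (m3 (i+2))
   - M (m3 (j+1)) (m3 (i+2)) * M (m3 (j+2)) (m3 (i+1))) / det3 M.
Definition inv2 (M : nat -> nat -> R) (i j : nat) : R :=
  let d := M 0%nat 0%nat * M 1%nat 1%nat - M 0%nat 1%nat * M 1%nat 0%nat in
  match i, j with
  | 0%nat, 0%nat => M 1%nat 1%nat / d
  | 1%nat, 1%nat => M 0%nat 0%nat / d
  | 0%nat, 1%nat => - M 0%nat 1%nat / d
  | _, _ => - M 1%nat 0%nat / d
  end.

Definition Gam (lam mu nu : R) (k i j : nat) (u : vec) : R :=
  / 2 * sum3 (fun l => inv3 (fun a b => Gm lam mu nu a b u) k l *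
     (pd (Gm lam mu nu j l) i u + pd (Gm lam mu nu i l) j u - pd (Gm lam mu nu i j) l u)).

Definition gdot (lam mu nu : R) (u : vec) (X Y : vec) : R :=
  sum3 (fun i => sum3 (fun j => Gm lam mu nu i j u * X i * Y j)).

Section Surface.
Variables (lam mu nu : R) (f : vec -> vec).

Definition df (a : nat) (s : vec) : vec := fun k => pd (fun s' => f s' k) a s.
Definition hI (a b : nat) (s : vec) : R := gdot lam mu nu (f s) (df a s) (df b s).
Definition Dab (a b : nat) (s : vec) : vec := fun k =>
  pd (fun s' => df b s' k) a s
  + sum3 (fun i => sum3 (fun j => Gam lam mu nu k i j (f s) * df a s i * df b s j)).
Definition perp (s : vec) (V : vec) : vec := fun k =>
  V k - sum2 (fun a => sum2 (fun b =>
          inv2 (fun c d => hI c d s) a b * gdot lam mu nu (f s) V (df a s) * df b s k)).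
Definition Bsf (a b : nat) (s : vec) : vec := perp s (Dab a b s).
Definition Hvec (s : vec) : vec := fun k =>
  / 2 * sum2 (fun a => sum2 (fun b => inv2 (fun c d => hI c d s) a b * Bsf a b s k)).
Definition normH (s : vec) : R := sqrt (gdot lam mu nu (f s) (Hvec s) (Hvec s)).
End Surface.

(* ---------- the torus U_theta ----------
   (cosh th e^{i al}, sinh th e^{i be}) = Fchart (al, sinh th cos be, sinh th sin be),
   since sqrt(1 + sinh^2 th) = cosh th. *)
Definition torus (th : R) (s : vec) : vec := fun k =>
  match k with
  | 0%nat => s 0%nat
  | 1%nat => sinh th * cos (s 1%nat)
  | 2%nat => sinh th * sin (s 1%nat)
  | _ => 0
  end.

Definition pt2 (al be : R) : vec := fun k =>
  match k with 0%nat => al | _ => be end.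

(* Main.v *)
Require Import Defs.
From Stdlib Require Import Reals Nsatz Lra Lia.
From Coquelicot Require Import Coquelicot.
Open Scope R_scope.

Definition rr (u : vec) := sqrt (1 + u 1%nat ^ 2 + u 2%nat ^ 2).

Lemma q_pos x y : 0 < 1 + x ^ 2 + y ^ 2.
Proof. nra. Qed.

Ltac dsolve := apply is_derive_unique; auto_derive;
  [ try (repeat split; apply q_pos) | try (unfold rr; simpl; field; apply Rgt_not_eq, sqrt_lt_R0, q_pos) ].

Lemma dF0 u : dF 0 u = ((- rr u * sin (u 0%nat), rr u * cos (u 0%nat)), (0, 0)).
Proof.
  unfold dF, pd, Fcomp, Fchart, upd; simpl.
  f_equal; f_equal; dsolve.
Qed.
Lemma dF1 u : dF 1 u = ((u 1%nat / rr u * cos (u 0%nat), u 1%nat / rr u * sin (u 0%nat)), (1, 0)).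
Proof.
  unfold dF, pd, Fcomp, Fchart, upd; simpl.
  f_equal; f_equal; dsolve.
Qed.
Lemma dF2 u : dF 2 u = ((u 2%nat / rr u * cos (u 0%nat), u 2%nat / rr u * sin (u 0%nat)), (0, 1)).
Proof.
  unfold dF, pd, Fcomp, Fchart, upd; simpl.
  f_equal; f_equal; dsolve.
Qed.
Definition Gc (L M x y : R) (i j : nat) : R :=
  let q := 1 + x ^ 2 + y ^ 2 in
  match i, j with
  | 0%nat, 0%nat => L * q ^ 2 + M * q * (x ^ 2 + y ^ 2)
  | 0%nat, 1%nat | 1%nat, 0%nat => q * y * (L + M)
  | 0%nat, 2%nat | 2%nat, 0%nat => - q * x * (L + M)
  | 1%nat, 1%nat => L * y ^ 2 + M * (1 + y ^ 2 * (1 + q)) / q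
  | 1%nat, 2%nat | 2%nat, 1%nat => - L * x * y - M * x * y * (1 + q) / q
  | _, _ => L * x ^ 2 + M * (1 + x ^ 2 * (1 + q)) / q
  end.

Lemma dF_gen i u : (i < 3)%nat -> dF i u =
  match i with 0%nat => ((- rr u * sin (u 0%nat), rr u * cos (u 0%nat)), (0, 0))
  | 1%nat => ((u 1%nat / rr u * cos (u 0%nat), u 1%nat / rr u * sin (u 0%nat)), (1, 0))
  | _ => ((u 2%nat / rr u * cos (u 0%nat), u 2%nat / rr u * sin (u 0%nat)), (0, 1)) end.
Proof.
  intros H; destruct i as [|[|[|i]]]; [apply dF0|apply dF1|apply dF2|lia].
Qed.

Lemma Gm_closed lam mu i j u : (i < 3)%nat -> (j < 3)%nat ->
  Gm lam mu mu i j u = Gc (lam ^ 2) (mu ^ 2) (u 1%nat) (u 2%nat) i j.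
Proof.
  intros Hi Hj.
  unfold Gm, gmetric; rewrite (dF_gen i u Hi), (dF_gen j u Hj).
  assert (Hr2 : rr u ^ 2 = 1 + u 1%nat ^ 2 + u 2%nat ^ 2).
  { unfold rr. rewrite pow2_sqrt; [reflexivity| left; apply q_pos]. }
  assert (Hr : rr u <> 0).
  { unfold rr. apply Rgt_not_eq, sqrt_lt_R0, q_pos. }
  assert (Hcs : cos (u 0%nat) ^ 2 + sin (u 0%nat) ^ 2 = 1).
  { rewrite <- (sin2_cos2 (u 0%nat)). unfold Rsqr; ring. }
  unfold Fchart; fold (rr u).
  set (r := rr u) in *; set (C := cos (u 0%nat)) in *; set (S := sin (u 0%nat)) in *;
  set (x := u 1%nat) in *; set (y := u 2%nat) in *; clearbody r C S x y.
  assert (Hir : r * / r = 1) by (field; auto).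
  assert (Hq : / (1 + x ^ 2 + y ^ 2) = / r * / r) by (rewrite <- Hr2; field; auto).
  destruct i as [|[|[|i]]]; destruct j as [|[|[|j]]]; try lia;
  unfold Gc, gmul, ginv, pair, cadd, cmul, cconj, copp, e_i, e_m1, e_wi, e_1; simpl;
  unfold Rdiv; try rewrite Hq; set (ir := / r) in *; clearbody ir; simpl in *; nsatz.
Qed.

Definition Gd (L M x y : R) (i j k : nat) : R :=
  let q := 1 + x ^ 2 + y ^ 2 in
  match k with
  | 1%nat =>
    match i, j with
    | 0%nat, 0%nat => (2 * (L + M) * q - M) * 2 * x
    | 0%nat, 1%nat | 1%nat, 0%nat => (L + M) * 2 * x * y
    | 0%nat, 2%nat | 2%nat, 0%nat => - (L + M) * (q + 2 * x ^ 2)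
    | 1%nat, 1%nat => - M * (1 + y ^ 2) * 2 * x / q ^ 2
    | 1%nat, 2%nat | 2%nat, 1%nat => - (L + M) * y - M * y * (q - 2 * x ^ 2) / q ^ 2
    | _, _ => 2 * (L + M) * x + 2 * M * x * y ^ 2 / q ^ 2
    end
  | 2%nat =>
    match i, j with
    | 0%nat, 0%nat => (2 * (L + M) * q - M) * 2 * y
    | 0%nat, 1%nat | 1%nat, 0%nat => (L + M) * (q + 2 * y ^ 2)
    | 0%nat, 2%nat | 2%nat, 0%nat => - (L + M) * 2 * x * y
    | 1%nat, 1%nat => 2 * (L + M) * y + 2 * M * y * x ^ 2 / q ^ 2
    | 1%nat, 2%nat | 2%nat, 1%nat => - (L + M) * x - M * x * (q - 2 * y ^ 2) / q ^ 2
    | _, _ => - M * (1 + x ^ 2) * 2 * y / q ^ 2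
    end
  | _ => 0
  end.

Lemma pdGm lam mu i j k u : (i < 3)%nat -> (j < 3)%nat -> (k < 3)%nat ->
  pd (Gm lam mu mu i j) k u = Gd (lam ^ 2) (mu ^ 2) (u 1%nat) (u 2%nat) i j k.
Proof.
  intros Hi Hj Hk. unfold pd.
  rewrite (Derive_ext _ (fun s => Gc (lam ^ 2) (mu ^ 2) (upd u k s 1%nat) (upd u k s 2%nat) i j))
    by (intros; apply Gm_closed; auto).
  unfold upd.
  destruct k as [|[|[|k]]]; try lia; simpl.
  - rewrite Derive_const; destruct i as [|[|[|i]]]; destruct j as [|[|[|j]]]; reflexivity.
  - pose proof (q_pos (u 1%nat) (u 2%nat)).
    destruct i as [|[|[|i]]]; destruct j as [|[|[|j]]]; try lia;
    apply is_derive_unique; unfold Gc, Gd; auto_derive; try (simpl; nra); field; nra.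
  - pose proof (q_pos (u 1%nat) (u 2%nat)).
    destruct i as [|[|[|i]]]; destruct j as [|[|[|j]]]; try lia;
    apply is_derive_unique; unfold Gc, Gd; auto_derive; try (simpl; nra); field; nra.
Qed.

Lemma contract3 (M : nat -> nat -> R) (E : nat -> R) m :
  det3 M <> 0 -> M 0%nat 1%nat = M 1%nat 0%nat -> M 0%nat 2%nat = M 2%nat 0%nat ->
  M 1%nat 2%nat = M 2%nat 1%nat -> (m < 3)%nat ->
  sum3 (fun k => M k m * (/ 2 * sum3 (fun l => inv3 M k l * E l))) = / 2 * E m.
Proof.
  intros Hd H01 H02 H12 Hm.
  unfold inv3; unfold det3, sum3, m3 in *; simpl in *.
  destruct m as [|[|[|m]]]; try lia; simpl; rewrite ?H01, ?H02, ?H12 in *; field; auto.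
Qed.

Lemma Gam_contract lam mu nu u m i j :
  det3 (fun a b => Gm lam mu nu a b u) <> 0 ->
  (forall a b, Gm lam mu nu a b u = Gm lam mu nu b a u) -> (m < 3)%nat ->
  sum3 (fun k => Gm lam mu nu k m u * Gam lam mu nu k i j u) =
  / 2 * (pd (Gm lam mu nu j m) i u + pd (Gm lam mu nu i m) j u - pd (Gm lam mu nu i j) m u).
Proof.
  intros Hd Hs Hm. unfold Gam.
  apply (contract3 (fun a b => Gm lam mu nu a b u)
     (fun l => pd (Gm lam mu nu j l) i u + pd (Gm lam mu nu i l) j u - pd (Gm lam mu nu i j) l u) m);
  auto.
Qed.

Lemma gdot_D lam mu nu u (A X Y N : vec) :
  gdot lam mu nu u (fun k => A k + sum3 (fun i => sum3 (fun j => Gam lam mu nu k i j u * X i * Y j))) N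
  = gdot lam mu nu u A N + sum3 (fun m => N m * sum3 (fun i => sum3 (fun j =>
       sum3 (fun k => Gm lam mu nu k m u * Gam lam mu nu k i j u) * X i * Y j))).
Proof. unfold gdot, sum3; ring. Qed.

Lemma df_t00 th s : df (torus th) 0 s 0%nat = 1.
Proof. unfold df, pd, torus, upd; simpl. apply is_derive_unique; auto_derive; auto; ring. Qed.
Lemma df_t01 th s : df (torus th) 0 s 1%nat = 0.
Proof. unfold df, pd, torus, upd; simpl. apply Derive_const. Qed.
Lemma df_t02 th s : df (torus th) 0 s 2%nat = 0.
Proof. unfold df, pd, torus, upd; simpl. apply Derive_const. Qed.
Lemma df_t10 th s : df (torus th) 1 s 0%nat = 0.
Proof. unfold df, pd, torus, upd; simpl. apply Derive_const. Qed.
Lemma df_t11 th s : df (torus th) 1 s 1%nat = - (sinh th * sin (s 1%nat)).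
Proof. unfold df, pd, torus, upd; simpl. apply is_derive_unique; auto_derive; auto; ring. Qed.
Lemma df_t12 th s : df (torus th) 1 s 2%nat = sinh th * cos (s 1%nat).
Proof. unfold df, pd, torus, upd; simpl. apply is_derive_unique; auto_derive; auto; ring. Qed.

Definition ddf_val (th : R) (s : vec) (a b k : nat) : R :=
  match a, b, k with
  | 1%nat, 1%nat, 1%nat => - (sinh th * cos (s 1%nat))
  | 1%nat, 1%nat, 2%nat => - (sinh th * sin (s 1%nat))
  | _, _, _ => 0
  end.

Lemma ddf_t th s a b k : (a < 2)%nat -> (b < 2)%nat -> (k < 3)%nat ->
  pd (fun s' => df (torus th) b s' k) a s = ddf_val th s a b k.
Proof.
  intros Ha Hb Hk; unfold pd.
  destruct b as [|[|b]]; try lia; destruct k as [|[|[|k]]]; try lia;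
  [ rewrite (Derive_ext _ (fun _ => 1)) by (intros; apply df_t00)
  | rewrite (Derive_ext _ (fun _ => 0)) by (intros; apply df_t01)
  | rewrite (Derive_ext _ (fun _ => 0)) by (intros; apply df_t02)
  | rewrite (Derive_ext _ (fun _ => 0)) by (intros; apply df_t10)
  | rewrite (Derive_ext _ (fun z => - (sinh th * sin (upd s a z 1%nat)))) by (intros; apply df_t11)
  | rewrite (Derive_ext _ (fun z => sinh th * cos (upd s a z 1%nat))) by (intros; apply df_t12) ];
  destruct a as [|[|a]]; try lia; unfold upd; simpl; try (rewrite Derive_const; reflexivity);
  apply is_derive_unique; auto_derive; auto; ring.
Qed.

Definition Nv (x y : R) : vec := fun k => match k with 1%nat => x | 2%nat => y | _ => 0 end.

Ltac rw_df := rewrite ?df_t00, ?df_t01, ?df_t02, ?df_t10, ?df_t11, ?df_t12.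
Ltac rw_Gm := rewrite ?(Gm_closed _ _ 0 0), ?(Gm_closed _ _ 0 1), ?(Gm_closed _ _ 0 2),
  ?(Gm_closed _ _ 1 0), ?(Gm_closed _ _ 1 1), ?(Gm_closed _ _ 1 2),
  ?(Gm_closed _ _ 2 0), ?(Gm_closed _ _ 2 1), ?(Gm_closed _ _ 2 2) by lia.

Lemma cs1 c : cos c ^ 2 + sin c ^ 2 = 1.
Proof. rewrite <- (sin2_cos2 c). unfold Rsqr; ring. Qed.
Lemma rho2 a c : (a * cos c) ^ 2 + (a * sin c) ^ 2 = a ^ 2.
Proof. replace ((a * cos c) ^ 2 + (a * sin c) ^ 2) with (a ^ 2 * (cos c ^ 2 + sin c ^ 2)) by ring. rewrite cs1; ring. Qed.

Ltac posit := apply Rgt_not_eq; repeat (apply Rmult_lt_0_compat || apply pow_lt); auto.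
Ltac nzt L M x y := match goal with |- ?E <> 0 => first
  [ solve [posit]
  | replace E with (M*(x*x+y*y)*(1+x*x+y*y)) by ring; posit
  | replace E with (M*(x*x+y*y)) by ring; posit
  | replace E with (L*M*(x*x+y*y)*((1+x*x+y*y)*(1+x*x+y*y))) by ring; posit
  | replace E with (L*M*(x*x+y*y)*(1+x*x+y*y)) by ring; posit
  | idtac E ] end.

Lemma perp_t lam mu th s (V : vec) k : (k < 3)%nat -> 0 < lam -> 0 < mu -> sinh th <> 0 ->
  perp lam mu mu (torus th) s V k =
  gdot lam mu mu (torus th s) V (Nv (torus th s 1%nat) (torus th s 2%nat))
  / gdot lam mu mu (torus th s) (Nv (torus th s 1%nat) (torus th s 2%nat)) (Nv (torus th s 1%nat) (torus th s 2%nat))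
  * Nv (torus th s 1%nat) (torus th s 2%nat) k.
Proof.
  intros Hk Hl Hm Hs.
  unfold perp, inv2, hI, gdot, sum2, sum3, Nv.
  destruct k as [|[|[|k]]]; try lia; rw_df; rw_Gm; simpl torus;
  assert (Hxy : (sinh th * cos (s 1%nat)) ^ 2 + (sinh th * sin (s 1%nat)) ^ 2 <> 0) by
   (rewrite rho2; apply pow_nonzero; auto);
  set (x := sinh th * cos (s 1%nat)) in *; set (y := sinh th * sin (s 1%nat)) in *;
  clearbody x y; set (L := lam ^ 2); set (M := mu ^ 2);
  assert (HL : 0 < L) by (unfold L; nra); assert (HM : 0 < M) by (unfold M; nra); clearbody L M;
  unfold Gc; simpl.
  all: assert (Hr : 0 < x * x + y * y) by (simpl in Hxy; nra);
       assert (Hq : 0 < 1 + x * x + y * y) by nra.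
  all: field; repeat split; nzt L M x y.
Qed.

Lemma sum3_ext (f g : nat -> R) : (forall i, (i < 3)%nat -> f i = g i) -> sum3 f = sum3 g.
Proof. intros H; unfold sum3; rewrite !H by lia; reflexivity. Qed.

Lemma gdot_D2 lam mu nu u (A X Y N : vec) :
  det3 (fun a b => Gm lam mu nu a b u) <> 0 ->
  (forall a b, Gm lam mu nu a b u = Gm lam mu nu b a u) ->
  gdot lam mu nu u (fun k => A k + sum3 (fun i => sum3 (fun j => Gam lam mu nu k i j u * X i * Y j))) N
  = gdot lam mu nu u A N + sum3 (fun m => N m * sum3 (fun i => sum3 (fun j =>
       / 2 * (pd (Gm lam mu nu j m) i u + pd (Gm lam mu nu i m) j u - pd (Gm lam mu nu i j) m u) * X i * Y j))).
Proof.
  intros Hd Hs. rewrite gdot_D. f_equal.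
  apply sum3_ext; intros m Hm; f_equal.
  apply sum3_ext; intros i Hi.
  apply sum3_ext; intros j Hj.
  rewrite Gam_contract; auto.
Qed.

Definition Tv (x y : R) (a : nat) : vec := fun k =>
  match a, k with
  | 0%nat, 0%nat => 1
  | 1%nat, 1%nat => - y
  | 1%nat, 2%nat => x
  | _, _ => 0
  end.

Lemma Gm_sym lam mu nu u a b : Gm lam mu nu a b u = Gm lam mu nu b a u.
Proof. unfold Gm, gmetric. ring. Qed.

Lemma det3_Gm lam mu u : det3 (fun a b => Gm lam mu mu a b u) = lam ^ 2 * (mu ^ 2) ^ 2.
Proof.
  unfold det3, sum3, m3; simpl. rw_Gm.
  pose proof (q_pos (u 1%nat) (u 2%nat)).
  unfold Gc; simpl. field. simpl in H; lra.
Qed.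

Definition gval (L M x y : R) (a b : nat) : R :=
  let r2 := x ^ 2 + y ^ 2 in let q := 1 + r2 in
  match a, b with
  | 0%nat, 0%nat => - 2 * L * q * r2 - M * r2 * (r2 + q)
  | 1%nat, 1%nat => - 2 * L * r2 ^ 2 - M * r2 * (r2 + q)
  | _, _ => (L + M) * r2 * (r2 + q)
  end.

Lemma gDN lam mu th s a b : (a < 2)%nat -> (b < 2)%nat -> 0 < lam -> 0 < mu ->
  gdot lam mu mu (torus th s) (Dab lam mu mu (torus th) a b s) (Nv (torus th s 1%nat) (torus th s 2%nat))
  = gval (lam ^ 2) (mu ^ 2) (torus th s 1%nat) (torus th s 2%nat) a b.
Proof.
  intros Ha Hb Hl Hm. unfold Dab.
  pose proof (gdot_D2 lam mu mu (torus th s) (fun k => pd (fun s' => df (torus th) b s' k) a s)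
     (df (torus th) a s) (df (torus th) b s) (Nv (torus th s 1%nat) (torus th s 2%nat))) as HD.
  cbv beta in HD. rewrite HD; clear HD.
  2: { rewrite det3_Gm. apply Rgt_not_eq. apply Rmult_lt_0_compat; apply pow_lt; try apply pow_lt; auto. }
  2: { apply Gm_sym. }
  unfold gdot, sum3, Nv.
  rewrite !ddf_t by lia.
  rewrite !pdGm by lia.
  destruct a as [|[|a]]; destruct b as [|[|b]]; try lia; rw_df; rw_Gm; unfold ddf_val; simpl torus;
  set (x := sinh th * cos (s 1%nat)) in *; set (y := sinh th * sin (s 1%nat)) in *;
  clearbody x y; set (L := lam ^ 2); set (M := mu ^ 2);
  assert (HL : 0 < L) by (unfold L; nra); assert (HM : 0 < M) by (unfold M; nra); clearbody L M;
  assert (Hq : 0 < 1 + x * x + y * y) by nra;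
  unfold Gc, Gd, gval; simpl; field; nzt L M x y.
Qed.

Lemma Hvec_t lam mu th s k : (k < 3)%nat -> 0 < lam -> 0 < mu -> sinh th <> 0 ->
  Hvec lam mu mu (torus th) s k =
  - (1 + 2 * (torus th s 1%nat ^ 2 + torus th s 2%nat ^ 2)) /
    (2 * mu ^ 2 * (torus th s 1%nat ^ 2 + torus th s 2%nat ^ 2))
  * Nv (torus th s 1%nat) (torus th s 2%nat) k.
Proof.
  intros Hk Hl Hm Hs.
  unfold Hvec, sum2, Bsf.
  rewrite !perp_t by auto.
  rewrite !gDN by (first [lia | auto]).
  assert (Hxy : (sinh th * cos (s 1%nat)) ^ 2 + (sinh th * sin (s 1%nat)) ^ 2 <> 0) by
   (rewrite rho2; apply pow_nonzero; auto).
  unfold inv2, hI, gdot, sum3, Nv.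
  rw_df; rw_Gm; simpl torus;
  set (x := sinh th * cos (s 1%nat)) in *; set (y := sinh th * sin (s 1%nat)) in *;
  clearbody x y; set (L := lam ^ 2); set (M := mu ^ 2).
  replace (mu ^ 2) with M by reflexivity.
  assert (HL : 0 < L) by (unfold L; nra); assert (HM : 0 < M) by (unfold M; nra); clearbody L M.
  assert (Hr : 0 < x * x + y * y) by (simpl in Hxy; rewrite !Rmult_1_r in Hxy; pose proof (Rle_0_sqr x); pose proof (Rle_0_sqr y); unfold Rsqr in *; lra).
  assert (Hq : 0 < 1 + x * x + y * y) by nra.
  destruct k as [|[|[|k]]]; try lia;
  unfold Gc, gval; simpl; field; repeat split; nzt L M x y.
Qed.

Lemma normH_t lam mu th al be : 0 < lam -> 0 < mu -> sinh th <> 0 ->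
  normH lam mu mu (torus th) (pt2 al be) =
  sqrt ((1 + 2 * sinh th ^ 2) ^ 2 / (4 * mu ^ 2 * sinh th ^ 2 * (1 + sinh th ^ 2))).
Proof.
  intros Hl Hm Hs.
  unfold normH, gdot, sum3.
  rewrite !Hvec_t by (first [lia | auto]).
  f_equal.
  pose proof (rho2 (sinh th) be) as Hrho.
  unfold Nv; rw_Gm; simpl torus.
  rewrite <- Hrho.
  assert (Hxy : (sinh th * cos be) ^ 2 + (sinh th * sin be) ^ 2 <> 0) by
   (rewrite rho2; apply pow_nonzero; auto).
  set (x := sinh th * cos be) in *; set (y := sinh th * sin be) in *;
  clearbody x y; set (L := lam ^ 2); set (M := mu ^ 2).
  assert (HL : 0 < L) by (unfold L; nra); assert (HM : 0 < M) by (unfold M; nra); clearbody L M.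
  assert (Hr : 0 < x * x + y * y) by (simpl in Hxy; rewrite !Rmult_1_r in Hxy; pose proof (Rle_0_sqr x); pose proof (Rle_0_sqr y); unfold Rsqr in *; lra).
  assert (Hq : 0 < 1 + x * x + y * y) by nra.
  assert (Hq' : 0 < 1 + (x * x + y * y)) by nra.
  unfold Gc; simpl; field; repeat split; nzt L M x y.
Qed.

Theorem mainTheorem7 :
  forall lam mu nu : R, 0 < lam -> 0 < mu -> 0 < nu -> mu = nu ->
  forall C : R, C > 1 / mu ->
  exists th : R, 0 < th /\
    forall al be : R, normH lam mu nu (torus th) (pt2 al be) = C.
Proof.
  intros lam mu nu Hl Hm Hn <- C HC.
  set (k := C * mu).
  assert (Hk : 1 < k).
  { unfold k. apply Rmult_gt_compat_r with (r := mu) in HC; auto.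
    unfold Rdiv in HC. rewrite Rmult_1_l, Rinv_l in HC; lra. }
  set (z := (k + 1) / (k - 1)).
  assert (Hz : 1 < z).
  { assert (z = 1 + 2 / (k - 1)) as -> by (unfold z; field; lra).
    assert (0 < 2 / (k - 1)) by (apply Rdiv_lt_0_compat; lra). lra. }
  exists (ln z / 4).
  assert (Hth : 0 < ln z / 4).
  { assert (0 < ln z) by (rewrite <- ln_1; apply ln_increasing; lra). lra. }
  split; auto.
  set (th := ln z / 4) in *.
  set (E := exp th).
  assert (HE : 1 < E) by (unfold E; rewrite <- exp_0; apply exp_increasing; auto).
  assert (HE4 : E ^ 4 = z).
  { unfold E. simpl. rewrite Rmult_1_r, <- !exp_plus.
    replace (th + (th + (th + th))) with (ln z) by (unfold th; field).
    apply exp_ln; lra. }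
  assert (Hsh : sinh th = (E - / E) / 2).
  { unfold sinh, E. rewrite exp_Ropp. reflexivity. }
  assert (HEi : / E < 1).
  { rewrite <- Rinv_1. apply Rinv_lt_contravar; lra. }
  assert (Hs : sinh th <> 0) by (rewrite Hsh; lra).
  intros al be.
  rewrite normH_t by auto.
  assert (HC2 : C = (E ^ 4 + 1) / ((E ^ 4 - 1) * mu)).
  { rewrite HE4. unfold z. unfold k in *. field. split; [lra|]. split; [lra|].
    intro; subst; lra. }
  assert (HC0 : 0 <= C).
  { rewrite HC2. apply Rlt_le, Rdiv_lt_0_compat; [nra|]. apply Rmult_lt_0_compat; auto.
    rewrite HE4; lra. }
  rewrite <- (sqrt_pow2 C HC0). f_equal.
  rewrite HC2, Hsh. field.
  assert (0 < E) by lra.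
  repeat split; try lra; nra.
Qed.
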